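(* Let $\varepsilon_0>0$, $\delta_1\in(0,1)$, and suppose $\mathcal{A}:\mathcal{D}\to\mathcal{S}$ is an $(\varepsilon_0,\delta_0)$-DP local randomizer with $$\delta_0\le \frac{(1-e^{-\varepsilon_0})\delta_1}{4e^{\varepsilon_0}\left(2+\frac{\ln(2/\delta_1)}{\ln(1/(1-e^{-5\varepsilon_0}))}\right)}.$$ Then there exists an $8\varepsilon_0$-DP local randomizer $\tilde{\mathcal{A}}:\mathcal{D}\to\mathcal{S}$ such that for every $d\in\mathcal{D}$, the total variation distance between the output distributions of $\mathcal{A}(d)$ and $\tilde{\mathcal{A}}(d)$ is at most $\delta_1$.
   Context: A randomized map $\mathcal{A}:\mathcal{D}\to\mathcal{S}$ is an $(\varepsilon_0,\delta_0)$-DP local randomizer if for all $d,d'\in\mathcal{D}$ and measurable $S\subseteq\mathcal{S}$, $\Pr[\mathcal{A}(d)\in S]\le e^{\varepsilon_0}\Pr[\mathcal{A}(d')\in S]+\delta_0$; it is $\varepsilon_0$-DP if this holds with $\delta_0=0$. *)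

(* Defs.v *)
From HB Require Import structures.
From mathcomp Require Import all_boot all_order all_algebra.
From mathcomp Require Import all_classical all_reals all_analysis.
Set Implicit Arguments. Unset Strict Implicit. Unset Printing Implicit Defensive.
Import Order.TTheory GRing.Theory Num.Theory.
Local Open Scope classical_set_scope.
Local Open Scope ring_scope.
Local Open Scope ereal_scope.

Definition dp_local_randomizer {R : realType} {dS : measure_display}
  {D : Type} {S : measurableType dS} (A : D -> probability S R)
  (eps0 delta0 : R) : Prop :=
  forall (d d' : D) (E : set S), measurable E ->
    A d E <= (expR eps0)%:E * A d' E + delta0%:E.

Definition pure_dp_local_randomizer {R : realType} {dS : measure_display}
  {D : Type} {S : measurableType dS} (A : D -> probability S R) (eps0 : R) : Prop :=
  dp_local_randomizer A eps0 0.

Definition tv_dist {R : realType} {dS : measure_display} {S : measurableType dS}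
  (P Q : probability S R) : \bar R :=
  ereal_sup [set `|P E - Q E| | E in [set E : set S | measurable E]].

(* Main.v *)
Require Import Defs.
From HB Require Import structures.
From mathcomp Require Import all_boot all_order all_algebra.
From mathcomp Require Import all_classical all_reals all_analysis.
From mathcomp Require Import lra.
Import Order.TTheory GRing.Theory Num.Theory.
Local Open Scope classical_set_scope.
Local Open Scope ring_scope.

Section clip.
Context (R : realType) (dS : measure_display) (S : measurableType dS).

Lemma fineE_prob (m : probability S R) (Y : set S) : measurable Y ->
  m Y = (fine (m Y))%:E.
Proof. by move=> mY; rewrite fineK // fin_num_measure. Qed.

Lemma split_meas (m : probability S R) (X Y : set S) : measurable X -> measurable Y ->
  fine (m X) = fine (m (X `&` Y)) + fine (m (X `&` ~` Y)).
Proof.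
move=> mX mY.
have mXY : measurable (X `&` Y) by exact: measurableI.
have mXY' : measurable (X `&` ~` Y) by apply: measurableI => //; exact: measurableC.
have E : X = (X `&` Y) `|` (X `&` ~` Y) by rewrite -setIUr setUCr setIT.
rewrite {1}E measureU //; last first.
  by rewrite setIACA setICr setI0.
by rewrite fineD // fin_num_measure.
Qed.

Arguments fineE_prob m {Y}.
Arguments split_meas m {X Y}.

Lemma clip (P Q : probability S R) (a b dl : R) :
  0 < b -> b <= a -> a * b = 1 ->
  (forall E, measurable E -> (P E <= a%:E * Q E + dl%:E)%E) ->
  (forall E, measurable E -> (Q E <= a%:E * P E + dl%:E)%E) ->
  exists nu : {measure set S -> \bar R}, forall X, measurable X ->
   [/\ nu X = (fine (nu X))%:E, fine (nu X) <= a * fine (Q X),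
       b * fine (Q X) <= fine (nu X) & `|fine (nu X) - fine (P X)| <= dl].
Proof.
move=> b0 ba ab hPQ hQP.
have dl0 : 0 <= dl.
  by have := hPQ _ measurable0; rewrite !measure0 mule0 add0e lee_fin.
have a0 : 0 < a by lra.
pose c1 := cadd (charge_of_finite_measure P) (cscale (-a) (charge_of_finite_measure Q)).
pose c2 := cadd (cscale b (charge_of_finite_measure Q)) (cscale (-1) (charge_of_finite_measure P)).
have [P1 [N1 [[mP1 pos1] [mN1 neg1] U1 I1]]] := Hahn_decomposition c1.
have [P2 [N2 [[mP2 pos2] [mN2 neg2] U2 I2]]] := Hahn_decomposition c2.
have CN1 : ~` P1 `<=` N1.
  move=> x nx; have : (P1 `|` N1) x by rewrite U1.
  by case.
have CN2 : ~` P2 `<=` N2.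
  move=> x nx; have : (P2 `|` N2) x by rewrite U2.
  by case.
have mG1 : measurable (~` P1 `&` ~` P2) by apply: measurableI; exact: measurableC.
have mG3 : measurable (P2 `&` ~` P1) by apply: measurableI => //; exact: measurableC.
pose a' := NngNum (ltW a0).
pose b' := NngNum (ltW b0).
pose nu := measure_add (measure_add (mrestr P mG1) (mscale a' (mrestr Q mP1)))
   (mscale b' (mrestr Q mG3)).
exists nu => X mX.
have mX1 : measurable (X `&` (~` P1 `&` ~` P2)) by exact: measurableI.
have mX2 : measurable (X `&` P1) by exact: measurableI.
have mX3 : measurable (X `&` (P2 `&` ~` P1)) by exact: measurableI.
have nuE : nu X = (fine (P (X `&` (~` P1 `&` ~` P2))) + a * fine (Q (X `&` P1))
      + b * fine (Q (X `&` (P2 `&` ~` P1))))%:E.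
  have nuE0 : nu X = (P (X `&` (~` P1 `&` ~` P2)) + a%:E * Q (X `&` P1)
      + b%:E * Q (X `&` (P2 `&` ~` P1)))%E.
    by rewrite /nu measure_addE /= /msum !big_ord_recl big_ord0 adde0 /=.
  rewrite nuE0 (fineE_prob P mX1) (fineE_prob Q mX2) (fineE_prob Q mX3).
  by rewrite -!EFinM -!EFinD.
suff : [/\ nu X = (fine (nu X))%:E, fine (nu X) <= a * fine (Q X),
       b * fine (Q X) <= fine (nu X) & `|fine (nu X) - fine (P X)| <= dl].
  by move=> H; exact: H.
rewrite nuE /=.
have spl (m : probability S R) : fine (m X) = fine (m (X `&` (~` P1 `&` ~` P2)))
    + fine (m (X `&` P1)) + fine (m (X `&` (P2 `&` ~` P1))).
  rewrite (split_meas m mX mP1) (split_meas m (measurableI _ _ mX (measurableC mP1)) mP2).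
  by rewrite -!setIA (setIC (~` P1) P2) (setIC (~` P1) (~` P2)); lra.
rewrite (spl P) (spl Q).
set p1 := fine (P (X `&` (~` P1 `&` ~` P2))).
set p2 := fine (P (X `&` P1)).
set p3 := fine (P (X `&` (P2 `&` ~` P1))).
set q1 := fine (Q (X `&` (~` P1 `&` ~` P2))).
set q2 := fine (Q (X `&` P1)).
set q3 := fine (Q (X `&` (P2 `&` ~` P1))).
have q10 : 0 <= q1 by rewrite /q1 fine_ge0.
have q20 : 0 <= q2 by rewrite /q2 fine_ge0.
have q30 : 0 <= q3 by rewrite /q3 fine_ge0.
have h1 : p1 - a * q1 <= 0.
  have H := neg1 _ mX1 (subset_trans (@subIsetr _ _ _) (subset_trans (@subIsetl _ _ _) CN1)).
  have : (P (X `&` (~` P1 `&` ~` P2)) + (-a)%:E * Q (X `&` (~` P1 `&` ~` P2)) <= 0)%E := H.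
  by rewrite (fineE_prob P mX1) (fineE_prob Q mX1) -EFinM -EFinD lee_fin -/p1 -/q1; lra.
have h2 : b * q1 - p1 <= 0.
  have H := neg2 _ mX1 (subset_trans (@subIsetr _ _ _) (subset_trans (@subIsetr _ _ _) CN2)).
  have : (b%:E * Q (X `&` (~` P1 `&` ~` P2)) + (-1)%:E * P (X `&` (~` P1 `&` ~` P2)) <= 0)%E := H.
  by rewrite (fineE_prob P mX1) (fineE_prob Q mX1) -!EFinM -EFinD lee_fin -/p1 -/p2 -/p3 -/q1 -/q2 -/q3; lra.
have h3 : 0 <= p2 - a * q2.
  have H := pos1 _ mX2 (@subIsetr _ _ _).
  have : (0 <= P (X `&` P1) + (-a)%:E * Q (X `&` P1))%E := H.
  by rewrite (fineE_prob P mX2) (fineE_prob Q mX2) -EFinM -EFinD lee_fin -/p1 -/p2 -/p3 -/q1 -/q2 -/q3; lra.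
have h4 : 0 <= b * q3 - p3.
  have H := pos2 _ mX3 (subset_trans (@subIsetr _ _ _) (@subIsetl _ _ _)).
  have : (0 <= b%:E * Q (X `&` (P2 `&` ~` P1)) + (-1)%:E * P (X `&` (P2 `&` ~` P1)))%E := H.
  by rewrite (fineE_prob P mX3) (fineE_prob Q mX3) -!EFinM -EFinD lee_fin -/p1 -/p2 -/p3 -/q1 -/q2 -/q3; lra.
have h5 : p2 <= a * q2 + dl.
  by have := hPQ _ mX2; rewrite (fineE_prob P mX2) (fineE_prob Q mX2) -EFinM -EFinD lee_fin -/p1 -/p2 -/p3 -/q1 -/q2 -/q3.
have h6 : q3 <= a * p3 + dl.
  by have := hQP _ mX3; rewrite (fineE_prob P mX3) (fineE_prob Q mX3) -EFinM -EFinD lee_fin -/p1 -/p2 -/p3 -/q1 -/q2 -/q3.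
have h7 : b * q3 <= p3 + b * dl.
  have := ler_wpM2l (ltW b0) h6; rewrite mulrDr mulrA (mulrC b a) ab mul1r //.
have b1 : b <= 1 by nra.
have h8 : b * q3 <= a * q3 by nra.
have h9 : b * q2 <= a * q2 by nra.
have h10 : b * dl <= dl by nra.
split => //.
- lra.
- lra.
- rewrite ler_norml; apply/andP; split; lra.
Qed.
End clip.

Theorem mainTheorem9 (R : realType) (dS : measure_display) (D : Type)
  (S : measurableType dS) (A : D -> probability S R) (eps0 delta0 delta1 : R) :
  0 < eps0 -> 0 < delta1 < 1 ->
  dp_local_randomizer A eps0 delta0 ->
  delta0 <= (1 - expR (- eps0)) * delta1 /
     (4 * expR eps0 *
      (2 + ln (2 / delta1) / ln (1 / (1 - expR (- (5 * eps0)))))) ->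
  exists A' : D -> probability S R,
    pure_dp_local_randomizer A' (8 * eps0) /\
    forall d : D, (tv_dist (A d) (A' d) <= delta1%:E)%E.
Proof.
move=> e0 /andP[d10 d11] hA hdl.
case: (pselect (exists d : D, True)) => [[d0 _]|nD]; last first.
  exists A; split.
    by move=> d; case: nD; exists d.
  by move=> d; case: nD; exists d.
set a := expR eps0 in hdl *.
set b := expR (- eps0) in hdl *.
have a1 : 1 < a by rewrite /a expR_gt1.
have b0 : 0 < b by rewrite /b expR_gt0.
have ab : a * b = 1 by rewrite /a /b expRN mulfV // gt_eqF // expR_gt0.
have b1 : b < 1 by rewrite /b expR_lt1 oppr_lt0.
have t0 : 0 <= delta0.
  by have := hA d0 d0 _ measurable0; rewrite !measure0 mule0 add0e lee_fin.
have tb : delta0 <= (1 - b) * delta1 / 8.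
  apply: (le_trans hdl).
  set L := ln (2 / delta1) / ln (1 / (1 - expR (- (5 * eps0)))).
  have L0 : 0 <= L.
    apply: divr_ge0; apply: ln_ge0.
      by rewrite ler_pdivlMr // mul1r; lra.
    have h5 : 0 < expR (- (5 * eps0)) by exact: expR_gt0.
    have h6 : expR (- (5 * eps0)) < 1 by rewrite expR_lt1 oppr_lt0 mulr_gt0.
    by rewrite ler_pdivlMr ?mul1r; lra.
  have x0 : 0 <= (1 - b) * delta1 by apply: mulr_ge0; lra.
  rewrite ler_pdivrMr; last by apply: mulr_gt0; [apply: mulr_gt0; lra|lra].
  rewrite mulrAC ler_pdivlMr //.
  have : 8 <= 4 * a * (2 + L) by nra.
  by move=> H; nra.
have t1 : delta0 * 8 <= (1 - b) * delta1 by move: tb; rewrite ler_pdivlMr.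
have t2 : 8 * delta0 <= 1 - b by nra.
have t3 : 8 * delta0 <= delta1 by nra.
have hcl : forall d, exists nu : {measure set S -> \bar R}, forall X, measurable X ->
   [/\ nu X = (fine (nu X))%:E, fine (nu X) <= a * fine (A d0 X),
       b * fine (A d0 X) <= fine (nu X) & `|fine (nu X) - fine (A d X)| <= delta0].
  move=> d; apply: (@clip R dS S (A d) (A d0) a b delta0 b0 _ ab (hA d d0) (hA d0 d)).
  lra.
have [nu Hnu] := choice hcl.
have Zf d : [/\ nu d setT = (fine (nu d setT))%:E,
    `|fine (nu d setT) - 1| <= delta0 & 0 < fine (nu d setT)].
  have [h1 _ _ h4] := Hnu d _ measurableT.
  rewrite probability_setT /= in h4.
  split => //.
  move: h4; rewrite ler_norml => /andP[h5 h6]; lra.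
have normE d U : mnormalize (nu d) (A d) U = (nu d U * (fine (nu d setT))^-1%:E)%E.
  have [h1 _ h3] := Zf d.
  rewrite /mnormalize /= h1 eqe gt_eqF //=.
have key d E : measurable E -> [/\ mnormalize (nu d) (A d) E =
     (fine (nu d E) / fine (nu d setT))%:E, 0 <= fine (nu d E)
     & fine (nu d E) <= fine (nu d setT)].
  move=> mE; have [h1 _ _ _] := Hnu d E mE; have [h1' _ _] := Zf d.
  split.
  - by rewrite normE {1}h1 -EFinM.
  - by rewrite fine_ge0 // measure_ge0.
  - have := le_measure (nu d) (mem_set mE) (mem_set measurableT) (@subsetT _ E).
    move=> H; have : (nu d E <= nu d setT)%E := H.
    by rewrite h1 h1' lee_fin.
exists (fun d => mnormalize (nu d) (A d)); split.
  move=> d d' E mE /=.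
  have [k1 k2 k3] := key d E mE; have [k1' k2' k3'] := key d' E mE.
  rewrite k1 k1' -EFinM -EFinD lee_fin addr0.
  have [_ u2 _ _] := Hnu d E mE; have [_ _ u3 _] := Hnu d' E mE.
  have [_ z1 z2] := Zf d; have [_ z1' z2'] := Zf d'.
  have e8 : a * a * a <= expR (8 * eps0).
    rewrite /a -!expRD ler_expR; lra.
  set n := fine (nu d E) in k2 k3 u2 *.
  set Z := fine (nu d setT) in k3 z1 z2 *.
  set n' := fine (nu d' E) in k2' k3' u3 *.
  set Z' := fine (nu d' setT) in k3' z1' z2' *.
  set q := fine (A d0 E) in u2 u3 *.
  have q0 : 0 <= q by rewrite /q fine_ge0.
  set w := n / Z; set w' := n' / Z'.
  have wZ : w * Z = n by rewrite /w divfK // gt_eqF.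
  have wZ' : w' * Z' = n' by rewrite /w' divfK // gt_eqF.
  have w0 : 0 <= w by rewrite /w divr_ge0 // ltW.
  have w0' : 0 <= w' by rewrite /w' divr_ge0 // ltW.
  move: z1 z1'; rewrite !ler_norml => /andP[z1 z1b] /andP[z1' z1b'].
  have s1 : w * (1 - delta0) <= a * q by nra.
  have s2 : b * q <= w' * (1 + delta0) by nra.
  have s3 : 1 + delta0 <= a * (1 - delta0) by nra.
  have s4 : a * q <= a * a * (w' * (1 + delta0)).
    have -> : a * q = a * a * (b * q) by rewrite mulrA -(mulrA a a b) ab mulr1.
    apply: ler_wpM2l => //; nra.
  have s5 : a * a * (w' * (1 + delta0)) <= a * a * a * w' * (1 - delta0).
    have h : w' * (1 + delta0) <= w' * (a * (1 - delta0)) by apply: ler_wpM2l.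
    have h2 := ler_wpM2l (mulr_ge0 (ltW (lt_trans ltr01 a1)) (ltW (lt_trans ltr01 a1))) h.
    apply: (le_trans h2); rewrite !mulrA; lra.
  have s6 : w <= a * a * a * w'.
    have h : w * (1 - delta0) <= (a * a * a * w') * (1 - delta0) by lra.
    by rewrite ler_pM2r in h; lra.
  nra.
move=> d; apply/ereal_supP => y [E mE <-].
have [k1 k2 k3] := key d E mE.
have [_ _ _ u4] := Hnu d E mE.
have [_ z1 z2] := Zf d.
suff : (`|A d E - mnormalize (nu d) (A d) E| <= delta1%:E)%E by [].
rewrite k1 (@fineE_prob R dS S (A d) E mE) -EFinB abse_EFin lee_fin.
set n := fine (nu d E) in k2 k3 u4 *.
set Z := fine (nu d setT) in k3 z1 z2 *.
set p := fine (A d E) in u4 *.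
set w := n / Z.
have wZ : w * Z = n by rewrite /w divfK // gt_eqF.
have w0 : 0 <= w by rewrite /w divr_ge0 // ltW.
have w1 : w <= 1 by rewrite /w ler_pdivrMr // mul1r.
move: z1 u4; rewrite !ler_norml => /andP[z1 z1b] /andP[u4 u4b].
have s1 : w * (Z - 1) <= delta0 by nra.
have s2 : - delta0 <= w * (Z - 1) by nra.
apply/andP; split; nra.
Qed.
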